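(* Let $G$ be a hypo-efficient domination graph that is also a vertex domination-critical graph. Then for every vertex $v\in V(G)$, the graph $G-v$ has exactly one efficient dominating set. If in addition $G$ is regular, then $G$ is a hypo-unique domination graph.
   Context: All graphs are finite, simple and undirected. For $v\in V(G)$, $N[v]$ is the closed neighborhood of $v$. A set $D\subseteq V(G)$ is dominating if every vertex of $G$ not in $D$ has a neighbor in $D$; $\gamma(G)$ is the minimum size of a dominating set, and a dominating set of size $\gamma(G)$ is a $\gamma$-set. A vertex $v$ is $\gamma$-critical if $\gamma(G-v)<\gamma(G)$; $G$ is a vertex domination-critical graph if every vertex is $\gamma$-critical. A set $D\subseteq V(H)$ is an efficient dominating set (EDS) of $H$ if $|N_H[v]\cap D|=1$ for every $v\in V(H)$. $G$ is a hypo-efficient domination graph if $G$ has no EDS but $G-v$ has at least one EDS for every $v\in V(G)$. $G$ is a hypo-unique domination graph if $G$ has at least two $\gamma$-sets but $G-v$ has exactly one $\gamma$-set for every $v\in V(G)$. *)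

(* Defs.v *)
From mathcomp Require Import all_boot.
Set Implicit Arguments. Unset Strict Implicit. Unset Printing Implicit Defensive.

(* Subgraphs G - v (and in general induced subgraphs G[S]) are represented
   by the vertex set S : {set T}; the edges are those of e between vertices of S. *)

Section Graphs.
Variable T : finType.
Variable e : rel T.

Definition simple_graph : Prop := symmetric e /\ irreflexive e.

Definition cnbhd (S : {set T}) (v : T) : {set T} :=
  [set u in S | (u == v) || e v u].

Definition dominating (S D : {set T}) : Prop :=
  D \subset S /\ forall x, x \in S -> x \notin D -> exists2 y, y \in D & e x y.

Definition dominatingb (S D : {set T}) : bool :=
  (D \subset S) && [forall x in S, (x \in D) || [exists y in D, e x y]].

(* domination number of G[S]: minimum size of a dominating set
   (S itself is dominating, so #|S| is a valid default) *)
Definition gamma (S : {set T}) : nat :=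
  \big[minn/#|S|]_(D : {set T} | dominatingb S D) #|D|.

Definition gamma_set (S D : {set T}) : Prop :=
  dominating S D /\ #|D| = gamma S.

Definition eds (S D : {set T}) : Prop :=
  D \subset S /\ forall v, v \in S -> #|cnbhd S v :&: D| = 1.

Definition del (v : T) : {set T} := [set: T] :\ v.

Definition gamma_critical (v : T) : Prop := gamma (del v) < gamma [set: T].

Definition vertex_domination_critical : Prop := forall v, gamma_critical v.

Definition hypo_efficient : Prop :=
  (~ exists D, eds [set: T] D) /\ (forall v, exists D, eds (del v) D).

Definition hypo_unique : Prop :=
  (exists D1 D2, D1 <> D2 /\ gamma_set [set: T] D1 /\ gamma_set [set: T] D2) /\
  (forall v, exists D, gamma_set (del v) D /\
      forall D', gamma_set (del v) D' -> D' = D).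

Definition degree (v : T) : nat := #|[set u | e v u]|.

Definition regular : Prop := exists k, forall v, degree v = k.

End Graphs.

(* Main.v *)
Require Import Defs.
From mathcomp Require Import all_boot.
Set Implicit Arguments. Unset Strict Implicit. Unset Printing Implicit Defensive.

Lemma card1_eq (T : finType) (A : {set T}) a b : #|A| = 1 -> a \in A -> b \in A -> a = b.
Proof. by move/eqP/cards1P=> [c ->]; rewrite !inE => /eqP-> /eqP->. Qed.

Lemma pick_in (T : finType) (A : {set T}) d : 0 < #|A| -> odflt d [pick w in A] \in A.
Proof.
case: pickP => [w Hw //|H]; rewrite card_gt0 => /set0Pn [w Hw].
by move: (H w); rewrite Hw.
Qed.

Lemma inj_card (T : finType) (A B : {set T}) (f : T -> T) :
  (forall a, a \in A -> f a \in B) -> {in A &, injective f} -> #|A| <= #|B|.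
Proof.
move=> HB Hinj; rewrite -(card_in_imset Hinj); apply: subset_leq_card.
by apply/subsetP=> y /imsetP [a Ha ->]; apply: HB.
Qed.

Lemma in_cnbhd (T : finType) (e : rel T) S v u :
  (u \in cnbhd e S v) = (u \in S) && ((u == v) || e v u).
Proof. by rewrite inE. Qed.

Lemma bigmin_le (I : eqType) (r : seq I) (P : pred I) (F : I -> nat) x0 j :
  j \in r -> P j -> \big[minn/x0]_(i <- r | P i) F i <= F j.
Proof.
elim: r => [//|a r IH]; rewrite in_cons big_cons => /orP [/eqP <- -> | Hj Pj].
  exact: geq_minl.
case: (P a); last exact: IH.
by rewrite geq_min IH // orbT.
Qed.

Lemma gamma_le (T : finType) (e : rel T) S D : dominatingb e S D -> gamma e S <= #|D|.
Proof.
move=> HD; rewrite /gamma; apply: bigmin_le => //; exact: mem_index_enum.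
Qed.

Lemma gamma_ge (T : finType) (e : rel T) S m :
  (forall D, dominatingb e S D -> m <= #|D|) -> m <= #|S| -> m <= gamma e S.
Proof.
move=> H HS; rewrite /gamma; apply: (big_ind (fun n => m <= n)) => //.
  by move=> a b Ha Hb; rewrite leq_min Ha Hb.
Qed.

Lemma domP (T : finType) (e : rel T) S D : dominating e S D <-> dominatingb e S D.
Proof.
split.
  move=> [HS H]; rewrite /dominatingb HS /=; apply/forall_inP => x Hx.
  case Hxd: (x \in D) => //=; have [y Hy Hxy] := H x Hx (negbT Hxd).
  by apply/existsP; exists y; rewrite Hy.
move=> /andP [HS /forall_inP H]; split => // x Hx Hnx.
move: (H x Hx); rewrite (negbTE Hnx) /= => /exists_inP [y Hy Hxy]; by exists y.
Qed.

Lemma eds_dom (T : finType) (e : rel T) S D : symmetric e -> eds e S D -> dominatingb e S D.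
Proof.
move=> sym [HS H]; apply/domP; split => // x Hx Hnx.
have: 0 < #|cnbhd e S x :&: D| by rewrite H.
rewrite card_gt0 => /set0Pn [y]; rewrite inE in_cnbhd => /andP [/andP [_ /orP [/eqP Hyx|Hxy]] Hy].
  by move: Hnx; rewrite -Hyx Hy.
by exists y.
Qed.

Lemma eds_min (T : finType) (e : rel T) S D D' : symmetric e ->
  eds e S D -> dominatingb e S D' -> #|D| <= #|D'|.
Proof.
move=> sym [HS H] /domP [HS' H'].
pose h d := odflt d [pick w in cnbhd e S d :&: D'].
have Hh : forall d, d \in D -> h d \in cnbhd e S d :&: D'.
  move=> d Hd; apply: pick_in; apply/card_gt0P.
  have HdS : d \in S by apply: (subsetP HS).
  case HdD': (d \in D').
    by exists d; rewrite inE in_cnbhd HdS eqxx HdD'.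
  have [y Hy Hdy] := H' d HdS (negbT HdD').
  by exists y; rewrite inE in_cnbhd (subsetP HS' y Hy) Hdy orbT Hy.
apply: (inj_card (f := h)).
  by move=> d Hd; move: (Hh d Hd); rewrite inE => /andP [].
move=> d1 d2 H1 H2 Heq.
have := Hh d1 H1; have := Hh d2 H2; rewrite -Heq.
set w := h d1; rewrite !inE => /andP [/andP [HwS Hw2] HwD'] /andP [/andP [_ Hw1] _].
apply: (card1_eq (H w HwS)); rewrite inE in_cnbhd.
  rewrite H1 (subsetP HS d1 H1) andbT /=.
  by move: Hw1 => /orP [/eqP ->|]; [rewrite eqxx | rewrite sym => ->; rewrite orbT].
rewrite H2 (subsetP HS d2 H2) andbT /=.
by move: Hw2 => /orP [/eqP ->|]; [rewrite eqxx | rewrite sym => ->; rewrite orbT].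
Qed.

Lemma eds_gamma (T : finType) (e : rel T) S D : symmetric e ->
  eds e S D -> #|D| = gamma e S.
Proof.
move=> sym HD; apply/eqP; rewrite eqn_leq; apply/andP; split.
  apply: gamma_ge; first by move=> D' HD'; apply: eds_min HD HD'.
  by apply: subset_leq_card; case: HD.
by apply: gamma_le; apply: eds_dom.
Qed.


Lemma crit_noadj (T : finType) (e : rel T) w E u : symmetric e ->
  gamma e (del w) < gamma e [set: T] -> eds e (del w) E -> u \in E -> ~~ e u w.
Proof.
move=> sym Hc HE Hu; apply/negP => Huw.
have Hdom : dominatingb e [set: T] E.
  apply/domP; split; first exact: subsetT.
  move=> x _ Hx; case: (eqVneq x w) => [->|Hxw].
    by exists u; rewrite // sym.
  have Hxd : x \in del w by rewrite !inE Hxw.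
  have [_ /domP [_ H]] : True /\ dominatingb e (del w) E by split; last exact: eds_dom.
  exact: H.
move: (gamma_le Hdom); rewrite (eds_gamma sym HE) leqNgt Hc //.
Qed.

Lemma in_del (T : finType) (v u : T) : (u \in del v) = (u != v).
Proof. by rewrite !inE andbT. Qed.

Lemma eds_sub (T : finType) (e : rel T) S D u : eds e S D -> u \in D -> u \in S.
Proof. by case=> HS _ Hu; apply: (subsetP HS). Qed.

Lemma uniq_core (T : finType) (e : rel T) v D1 D2 x : symmetric e ->
  vertex_domination_critical e -> (forall w, exists D, eds e (del w) D) ->
  eds e (del v) D1 -> eds e (del v) D2 -> x \in D1 -> x \notin D2 -> False.
Proof.
move=> sym crit hypo H1 H2 Hx1 Hx2.
have [Dx Hx] := hypo x.
have L12 : #|D1| <= #|D2| by apply: eds_min H1 (eds_dom sym H2).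
pose h b := odflt b [pick w in cnbhd e (del x) b :&: Dx].
have Hh : forall b, b \in D2 -> h b \in cnbhd e (del x) b :&: Dx.
  move=> b Hb; apply: pick_in; case: Hx => _ ->; first by [].
  by rewrite in_del; apply/eqP => Hbx; move: Hx2; rewrite -Hbx Hb.
have Hbv : forall b, b \in D2 -> b != v by move=> b /(eds_sub H2); rewrite in_del.
have L2x : #|D2| <= #|Dx :\ v|.
  apply: (inj_card (f := h)).
    move=> b Hb; move: (Hh b Hb); rewrite !inE => /andP [/andP [_ Hw] ->].
    rewrite andbT; move: Hw => /orP [/eqP ->|Hbw]; first exact: Hbv.
    apply/eqP => Hwv; move: (crit_noadj sym (crit v) H2 Hb); by rewrite -Hwv Hbw.
  move=> b1 b2 Hb1 Hb2 Heq.
  have := Hh b1 Hb1; have := Hh b2 Hb2; rewrite -Heq; set w := h b1.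
  rewrite !inE => /andP [/andP [_ Hw2] _] /andP [/andP [_ Hw1] _].
  have Hwv : w != v.
    move: Hw1 => /orP [/eqP ->|Hbw]; first exact: Hbv.
    apply/eqP => Hwv; move: (crit_noadj sym (crit v) H2 Hb1); by rewrite -Hwv Hbw.
  case: H2 => _ H2; apply: (card1_eq (H2 w _)); first by rewrite in_del.
    rewrite inE in_cnbhd in_del Hbv //= Hb1 andbT.
    by move: Hw1 => /orP [/eqP ->|]; [rewrite eqxx | rewrite sym => ->; rewrite orbT].
  rewrite inE in_cnbhd in_del Hbv //= Hb2 andbT.
  by move: Hw2 => /orP [/eqP ->|]; [rewrite eqxx | rewrite sym => ->; rewrite orbT].
pose g c := odflt c [pick w in cnbhd e (del v) c :&: D1].
have Hcx : forall c, c \in Dx -> c != x by move=> c /(eds_sub Hx); rewrite in_del.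
have Hg : forall c, c \in Dx :\ v -> g c \in cnbhd e (del v) c :&: D1.
  move=> c /setD1P [Hcv Hc]; apply: pick_in; case: H1 => _ ->//.
  by rewrite in_del.
have Lx1 : #|Dx :\ v| <= #|D1 :\ x|.
  apply: (inj_card (f := g)).
    move=> c Hc; move: (Hg c Hc); rewrite !inE => /andP [/andP [_ Hw] ->].
    rewrite andbT; move: Hc; rewrite !inE => /andP [_ Hc].
    move: Hw => /orP [/eqP ->|Hcw]; first exact: Hcx.
    apply/eqP => Hwx; move: (crit_noadj sym (crit x) Hx Hc); by rewrite -Hwx Hcw.
  move=> c1 c2 Hc1 Hc2 Heq.
  have := Hg c1 Hc1; have := Hg c2 Hc2; rewrite -Heq; set w := g c1.
  rewrite !inE => /andP [/andP [_ Hw2] HwD1] /andP [/andP [_ Hw1] _].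
  move: Hc1 Hc2; rewrite !inE => /andP [_ Hc1] /andP [_ Hc2].
  have Hwx : w != x.
    move: Hw1 => /orP [/eqP ->|Hcw]; first exact: Hcx.
    apply/eqP => Hwx; move: (crit_noadj sym (crit x) Hx Hc1); by rewrite -Hwx Hcw.
  case: Hx => _ Hx'; apply: (card1_eq (Hx' w _)); first by rewrite in_del.
    rewrite inE in_cnbhd in_del Hcx //= Hc1 andbT.
    by move: Hw1 => /orP [/eqP ->|]; [rewrite eqxx | rewrite sym => ->; rewrite orbT].
  rewrite inE in_cnbhd in_del Hcx //= Hc2 andbT.
  by move: Hw2 => /orP [/eqP ->|]; [rewrite eqxx | rewrite sym => ->; rewrite orbT].
have : #|D1| = (x \in D1) + #|D1 :\ x| by rewrite -cardsD1.
rewrite Hx1 => E1.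
have := leq_trans L12 (leq_trans L2x Lx1); rewrite E1 add1n ltnn //.
Qed.


Lemma cardI_sum (T : finType) (A B : {set T}) : #|A :&: B| = \sum_(d in B) (d \in A).
Proof.
rewrite -sum1_card big_mkcond [RHS]big_mkcond /=; apply: eq_bigr => d _.
by rewrite inE; case: (d \in A); case: (d \in B).
Qed.

Lemma exch (T : finType) (e : rel T) (S D : {set T}) : symmetric e -> D \subset S ->
  \sum_(z in S) #|cnbhd e S z :&: D| = \sum_(d in D) #|cnbhd e S d|.
Proof.
move=> sym HD.
under eq_bigr do rewrite cardI_sum.
rewrite exchange_big /=; apply: eq_bigr => d Hd.
have E : cnbhd e S d :&: S = cnbhd e S d.
  by apply/setIidPl/subsetP => u; rewrite in_cnbhd => /andP [].
rewrite -E cardI_sum; apply: eq_bigr => z Hz.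
rewrite !in_cnbhd Hz (subsetP HD d Hd) /= eq_sym sym //.
Qed.

Lemma sum_ge1_eq (T : finType) (S : {set T}) (f : T -> nat) :
  (forall z, z \in S -> 0 < f z) -> \sum_(z in S) f z <= #|S| ->
  forall z, z \in S -> f z = 1.
Proof.
move=> H1 Hs z Hz; apply/eqP; rewrite eqn_leq H1 // andbT; apply/negP => /negP.
rewrite -ltnNge => H2.
have Hle : #|S :\ z| <= \sum_(i in S | i != z) f i.
  rewrite -sum1_card; rewrite (eq_bigl (fun i => (i \in S) && (i != z))).
    by apply: leq_sum => i /andP [Hi _]; exact: H1.
  by move=> i; rewrite !inE andbC.
move: Hs; rewrite (bigD1 z) //= (cardsD1 z S) Hz add1n => Hs.
have := leq_add H2 Hle; rewrite addSn => H; have := leq_trans H Hs.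
by rewrite ltnS leqNgt ltnS leqnn.
Qed.


Lemma cn_le (T : finType) (e : rel T) (S : {set T}) d :
  #|cnbhd e S d| <= (degree e d).+1.
Proof.
have Hsub : cnbhd e S d \subset d |: [set u | e d u].
  by apply/subsetP => u; rewrite in_cnbhd !inE => /andP [_].
apply: (leq_trans (subset_leq_card Hsub)).
by rewrite cardsU1 /degree; case: (d \notin _).
Qed.

Lemma cn_eq (T : finType) (e : rel T) v d : irreflexive e ->
  d != v -> ~~ e d v -> #|cnbhd e (del v) d| = (degree e d).+1.
Proof.
move=> irr Hdv Hnd.
have -> : cnbhd e (del v) d = d |: [set u | e d u].
  apply/setP => u; rewrite in_cnbhd in_del !inE.
  case: (eqVneq u d) => [->|_] /=; first by rewrite Hdv.
  case Hdu: (e d u); rewrite ?andbT ?andbF //.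
  by apply/eqP => Huv; move: Hnd; rewrite -Huv Hdu.
rewrite cardsU1 inE irr.
by [].
Qed.

Lemma gset_add (T : finType) (e : rel T) w Dw : symmetric e ->
  vertex_domination_critical e -> eds e (del w) Dw ->
  gamma_set e [set: T] (w |: Dw) /\ #|w |: Dw| = (#|Dw|).+1.
Proof.
move=> sym crit Hw.
have Hnw : w \notin Dw by apply/negP => /(eds_sub Hw); rewrite in_del eqxx.
have Hc : #|w |: Dw| = (#|Dw|).+1 by rewrite cardsU1 Hnw.
have Hdom : dominating e [set: T] (w |: Dw).
  split; first exact: subsetT.
  move=> x _; rewrite !inE negb_or => /andP [Hxw HxD].
  have [_ /domP [_ H]] : True /\ dominatingb e (del w) Dw by split; last exact: eds_dom.
  have Hxd : x \in del w by rewrite in_del.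
  have [y Hy Hxy] := H x Hxd HxD.
  by exists y; rewrite // !inE Hy orbT.
split=> //; split=> //.
apply/eqP; rewrite eqn_leq gamma_le ?andbT; last by apply/domP.
by rewrite Hc (eds_gamma sym Hw) (crit w).
Qed.

Lemma reg_eds (T : finType) (e : rel T) v D D' : simple_graph e ->
  vertex_domination_critical e -> regular e ->
  eds e (del v) D -> gamma_set e (del v) D' -> eds e (del v) D'.
Proof.
move=> [sym irr] crit [k Hk] HD [[HS' Hd'] Hc'].
split=> //.
have HDS : D \subset del v by case: HD.
have E1 : \sum_(z in del v) #|cnbhd e (del v) z :&: D| = #|del v|.
  rewrite -sum1_card; apply: eq_bigr => z Hz; by case: HD => _ ->.
rewrite exch // in E1.
have E2 : \sum_(d in D) #|cnbhd e (del v) d| = #|D| * k.+1.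
  rewrite -sum_nat_const; apply: eq_bigr => d Hd.
  rewrite cn_eq // ?Hk //; first by move: (eds_sub HD Hd); rewrite in_del.
  exact: crit_noadj sym (crit v) HD Hd.
apply: sum_ge1_eq.
  move=> z Hz; rewrite card_gt0; apply/set0Pn.
  case Hz': (z \in D'); first by exists z; rewrite inE in_cnbhd Hz eqxx Hz'.
  have [y Hy Hzy] := Hd' z Hz (negbT Hz').
  by exists y; rewrite inE in_cnbhd (subsetP HS' y Hy) Hzy orbT Hy.
rewrite exch //.
apply: leq_trans; first by apply: leq_sum => d _; exact: cn_le.
under eq_bigr do rewrite Hk.
by rewrite sum_nat_const Hc' -(eds_gamma sym HD) -E2 E1.
Qed.


Lemma part1 (T : finType) (e : rel T) : simple_graph e -> hypo_efficient e ->
  vertex_domination_critical e ->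
  forall v : T, exists D : {set T},
      eds e (del v) D /\ forall D', eds e (del v) D' -> D' = D.
Proof.
move=> [sym irr] [_ hypo] crit v.
have [D HD] := hypo v.
exists D; split=> // D' HD'.
apply/eqP; rewrite eqEsubset; apply/negPn/negP; rewrite negb_and => /orP [] /subsetPn [x Hx Hnx].
  exact: (uniq_core sym crit hypo HD' HD Hx Hnx).
exact: (uniq_core sym crit hypo HD HD' Hx Hnx).
Qed.

Unset Implicit Arguments.
Theorem theorem3p15 (T : finType) (e : rel T) :
  simple_graph e ->
  hypo_efficient e ->
  vertex_domination_critical e ->
  (forall v : T, exists D : {set T},
      eds e (del v) D /\ forall D', eds e (del v) D' -> D' = D) /\
  (regular e -> hypo_unique e).
Proof.
move=> simp hyp crit.
have P1 := part1 simp hyp crit.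
split=> // reg.
move: (simp) (hyp) => [sym irr] [noeds hypo].
split.
  case: (pickP (@predT T)) => [v0 _|H0]; last first.
    exfalso; apply: noeds; exists set0; split; first exact: sub0set.
    by move=> v; move: (H0 v).
  have [D0 H0] := hypo v0.
  have [G0 _] := gset_add sym crit H0.
  case: (pickP [pred w | w \notin v0 |: D0]) => [w /= Hw|Hall]; last first.
    exfalso; apply: noeds; exists [set: T]; split=> // z _.
    apply/eqP/cards1P; exists z; apply/setP => u; rewrite !inE andbT.
    case: (eqVneq u z) => [//|Huz] /=; apply/negP => Hzu.
    have Hz : z \in v0 |: D0 by move: (Hall z) => /= /negbFE.
    have Hu : u \in v0 |: D0 by move: (Hall u) => /= /negbFE.
    move: Hz Hu; rewrite !inE.
    case: (eqVneq z v0) => [Ezv|Hzv] /=.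
      subst z; case: (eqVneq u v0) => [Euv|_] /=; first by subst u; rewrite irr in Hzu.
      by move=> _ Hu; move: (crit_noadj sym (crit v0) H0 Hu); rewrite sym Hzu.
    case: (eqVneq u v0) => [Euv|Huv] /= Hz.
      by subst u; move=> _; move: (crit_noadj sym (crit v0) H0 Hz); rewrite Hzu.
    move=> Hu; case: H0 => _ H0.
    have Hzd : z \in del v0 by rewrite in_del.
    have := card1_eq (H0 z Hzd) (a := z) (b := u).
    rewrite !inE Hzv Huv eqxx Hz Hu Hzu /= ?orbT => Heq.
    by move: Huz; rewrite Heq // eqxx.
  have [Dw Hw'] := hypo w.
  have [Gw _] := gset_add sym crit Hw'.
  exists (v0 |: D0), (w |: Dw); split=> //.
  by move=> Heq; move: Hw; rewrite Heq !inE eqxx.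
move=> v; have [D [HD HU]] := P1 v.
exists D; split.
  split; first by apply/domP; apply: eds_dom.
  exact: eds_gamma.
move=> D' HD'; apply: HU; exact: reg_eds simp crit reg HD HD'.
Qed.
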